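(* Let $d:E\to\mathbb{Z}_{>0}$ be a positive integer edge cost, $M$ a positive integer, and $e_0\in E$ an edge with $d(e_0)$ even. Define $d_1:E\to\mathbb{Z}_+$ by $d_1(e_0)=d(e_0)-1$ and $d_1(e)=d(e)$ for $e\neq e_0$. If $p\in\mathbb{G}^n$ is a minimizer of $h_{d,M}$, then there exists a minimizer $q\in\mathbb{G}^n$ of $h_{d_1,M}$ with $\|p-q\|\le 2$.
   Context: Network: simple undirected graph $(V,E)$, $V=\{1,\dots,n\}$, terminals $S=\{1,\dots,k\}\subseteq V$, $k\ge3$, no edge between two terminals, node capacities $c:V\setminus S\to\mathbb{Z}_+$. Grid: the infinite $k$-star $\mathbb{T}$ is $\mathbb{R}_+\times\{1,\dots,k\}$ with all $(0,s)$ identified to a point $0$; $(x,s)$ is also written $x$; $\mathrm{dist}((x,s),(x',s'))=|x-x'|$ if $s=s'$, $x+x'$ otherwise. $x$ is integral if $\mathrm{dist}(x,0)\in\mathbb{Z}$, proper half-integral if $2\mathrm{dist}(x,0)\in\mathbb{Z}$ but $\mathrm{dist}(x,0)\notin\mathbb{Z}$. $\mathbb{G}\subseteq\mathbb{T}\times\mathbb{R}$ is the set of $(x,y)$ with $x,y$ both integral or both proper half-integral. For $(x,y),(x',y')$ put $\|(x,y)-(x',y')\|=\mathrm{dist}(x,x')+|y-y'|$, and for $p,q\in\mathbb{G}^n$, $\|p-q\|=\max_i\|p_i-q_i\|$. Potential for $d$ and $M$: $(x,y)=((x_1,y_1),\dots,(x_n,y_n))\in\mathbb{G}^n$ with $\mathrm{dist}(x_i,x_j)-y_i-y_j\le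 2d(ij)$ for all $ij\in E$, $(x_s,y_s)=((M,s),0)$ for $s\in S$, $y_i\ge0$ and $\mathrm{dist}(0,x_i)\le M$ for all $i\in V$. $h_{d,M}(x,y)=\sum_{i\in V\setminus S}c_iy_i$ if $(x,y)$ is a potential for $d$ and $M$, and $+\infty$ otherwise. *)

(* Defs.v *)
From Stdlib Require Import Reals List Arith ZArith.
From Coquelicot Require Import Rbar.
From Stdlib Require Import ClassicalDescription.
Open Scope R_scope.

(* A point of the infinite k-star T: a radius r >= 0 on leg s (1 <= s <= k).
   All points with r = 0 represent the same point 0; only tdist is used. *)
Record Tpt := mkT { tr : R; tleg : nat }.

Definition valid_T (k : nat) (x : Tpt) : Prop :=
  0 <= tr x /\ (1 <= tleg x <= k)%nat.

Definition tdist (x x' : Tpt) : R :=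
  if Nat.eqb (tleg x) (tleg x') then Rabs (tr x - tr x') else tr x + tr x'.

Definition is_int (r : R) : Prop := exists z : Z, r = IZR z.
Definition is_proper_half (r : R) : Prop := exists z : Z, r = IZR z + / 2.

(* x is integral iff dist(x,0) = tr x is an integer, proper half-integral
   iff tr x is an integer plus 1/2. *)
Definition in_G (k : nat) (p : Tpt * R) : Prop :=
  valid_T k (fst p) /\
  ((is_int (tr (fst p)) /\ is_int (snd p)) \/
   (is_proper_half (tr (fst p)) /\ is_proper_half (snd p))).

Definition in_Gn (n k : nat) (p : nat -> Tpt * R) : Prop :=
  forall i, (1 <= i <= n)%nat -> in_G k (p i).

Definition gdist (a b : Tpt * R) : R :=
  tdist (fst a) (fst b) + Rabs (snd a - snd b).

Definition gnorm (n : nat) (p q : nat -> Tpt * R) : R :=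
  fold_right Rmax 0 (map (fun i => gdist (p i) (q i)) (seq 1 n)).

(* Network: V = {1..n}, S = {1..k}, edge relation E, capacities c on V\S. *)
Definition simple_network (n k : nat) (E : nat -> nat -> Prop) : Prop :=
  (3 <= k <= n)%nat /\
  (forall i j, E i j -> (1 <= i <= n)%nat /\ (1 <= j <= n)%nat /\ i <> j) /\
  (forall i j, E i j -> E j i) /\
  (forall i j, E i j -> ~ ((i <= k)%nat /\ (j <= k)%nat)).

Definition is_potential (n k : nat) (E : nat -> nat -> Prop)
    (d : nat -> nat -> nat) (M : nat) (p : nat -> Tpt * R) : Prop :=
  (forall i j, E i j ->
     tdist (fst (p i)) (fst (p j)) - snd (p i) - snd (p j) <= 2 * INR (d i j)) /\
  (forall s, (1 <= s <= k)%nat ->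
     tr (fst (p s)) = INR M /\ tleg (fst (p s)) = s /\ snd (p s) = 0) /\
  (forall i, (1 <= i <= n)%nat ->
     0 <= snd (p i) /\ tdist (mkT 0 1) (fst (p i)) <= INR M).

Definition cost (n k : nat) (c : nat -> nat) (p : nat -> Tpt * R) : R :=
  fold_right Rplus 0 (map (fun i => INR (c i) * snd (p i)) (seq (S k) (n - k))).

Definition h (n k : nat) (E : nat -> nat -> Prop) (c : nat -> nat)
    (d : nat -> nat -> nat) (M : nat) (p : nat -> Tpt * R) : Rbar :=
  if excluded_middle_informative (is_potential n k E d M p)
  then Finite (cost n k c p) else p_infty.

Definition is_minimizer (n k : nat) (E : nat -> nat -> Prop) (c : nat -> nat)
    (d : nat -> nat -> nat) (M : nat) (p : nat -> Tpt * R) : Prop :=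
  in_Gn n k p /\
  forall q, in_Gn n k q -> Rbar_le (h n k E c d M p) (h n k E c d M q).

Definition dec_edge (d : nat -> nat -> nat) (a b : nat) : nat -> nat -> nat :=
  fun i j => if ((Nat.eqb i a && Nat.eqb j b) || (Nat.eqb i b && Nat.eqb j a))%bool
             then (d i j - 1)%nat else d i j.

(* Main.v *)
Require Import Defs.
From Stdlib Require Import Reals Lra Lia ZArith Arith List Classical ClassicalDescription Wf_nat.
From Coquelicot Require Import Rbar.
(* Proof strategy: translate half-integral potentials to doubled integer
   coordinates, take a d1-minimizer closest to p, and derive a contradiction from a
   discrete exchange (level-set) argument on the k-star when the distance exceeds 2. *)
Open Scope Z_scope.

Record zp := ZP { zr : Z; zt : nat; zy : Z }.
Definition d2 (P Q : zp) : Z :=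
  if Nat.eqb (zt P) (zt Q) then Z.abs (zr P - zr Q) else zr P + zr Q.
Definition fz (P : zp) (s : nat) : Z := if Nat.eqb (zt P) s then zr P else - zr P.
Definition Gh (c x : Z) : Z :=
  if Z.leb (2*c) x then 1 else if Z.leb x (-(2*c)) then -1 else 0.
Definition op (c : Z) (X W : zp) : zp :=
  let D := d2 X W in
  let ga := Gh c (D + (zy W - zy X)) in
  let gb := Gh c (D - (zy W - zy X)) in
  if Nat.eqb (zt X) (zt W) then
     ZP (if Z.leb (zr X) (zr W) then zr X + (ga + gb) else zr X - (ga + gb)) (zt X) (zy X + (ga - gb))
  else if Z.leb (ga + gb) (zr X) then ZP (zr X - (ga + gb)) (zt X) (zy X + (ga - gb))
  else ZP ((ga + gb) - zr X) (zt W) (zy X + (ga - gb)).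

Definition okp (P : zp) : Prop := 0 <= zr P /\ 0 <= zy P /\ Z.even (zr P + zy P) = true.

Ltac dall := repeat match goal with
 | |- context [Nat.eqb ?a ?b] => destruct (Nat.eqb_spec a b)
 | |- context [Z.leb ?a ?b] => destruct (Z.leb_spec a b)
 | H : context [Nat.eqb ?a ?b] |- _ => destruct (Nat.eqb_spec a b)
 | H : context [Z.leb ?a ?b] |- _ => destruct (Z.leb_spec a b)
 end.

Lemma even_wit x : Z.even x = true -> exists m, x = 2*m.
Proof. intros H. apply Z.even_spec in H. destruct H as [m Hm]. exists m; lia. Qed.

Lemma N1 c X W s : 1 <= c -> okp X -> okp W ->
  fz (op c X W) s + zy (op c X W) >= fz X s + zy X + 2 * Gh c (fz W s + zy W - (fz X s + zy X)).
Proof.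
  intros Hc [HX1 [HX2 HX3]] [HW1 [HW2 HW3]].
  apply even_wit in HX3; apply even_wit in HW3. destruct HX3 as [m1 Hm1]; destruct HW3 as [m2 Hm2].
  unfold op, fz, Gh, d2; destruct X as [rx tx yx]; destruct W as [rw tw yw]; cbn [zr zt zy] in *.
  dall; cbn [zr zt zy] in *; dall; lia.
Qed.

Ltac prep X W := destruct X as [rx tx yx]; destruct W as [rw tw yw]; cbn [zr zt zy] in *.

Ltac okd := repeat match goal with
 | H : okp _ |- _ => let a := fresh in let b := fresh in let e := fresh in
     destruct H as [a [b e]]; apply even_wit in e; destruct e
 end.

Lemma N2 c X W s : 1 <= c -> okp X -> okp W ->
  (zt X = zt W \/ s = zt X \/ s = zt W \/ zr X = 0 \/ zr W = 0) ->
  fz (op c X W) s + zy (op c X W) = fz X s + zy X + 2 * Gh c (fz W s + zy W - (fz X s + zy X)) /\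
  fz (op c X W) s - zy (op c X W) = fz X s - zy X + 2 * Gh c (fz W s - zy W - (fz X s - zy X)).
Proof.
  intros Hc HX HW Hex. okd.
  unfold op, fz, Gh, d2; prep X W.
  dall; cbn [zr zt zy] in *; dall; lia.
Qed.

Lemma even_of x m : x = 2*m -> Z.even x = true.
Proof. intros ->. apply Z.even_spec. exists m; lia. Qed.

Lemma op_ok c X W : 1 <= c -> okp X -> okp W -> okp (op c X W).
Proof.
  intros Hc HX HW. okd. unfold okp.
  assert (Hp : exists m, zr (op c X W) + zy (op c X W) = 2*m /\ 0 <= zr (op c X W) /\ 0 <= zy (op c X W)).
  { assert (A: 0 <= zr (op c X W) /\ 0 <= zy (op c X W) /\ exists j, zr (op c X W) + zy (op c X W) = zr X + zy X + 2*j).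
    { unfold op, Gh, d2; prep X W.
      dall; cbn [zr zt zy] in *; dall; (split; [lia|split;[lia|]]);
      match goal with |- exists j, ?L = ?R + 2*j => exists ((L - R)/2) end; Z.div_mod_to_equations; lia. }
    destruct A as [A1 [A2 [j Hj]]]. exists (j + ltac:(match goal with H : zr X + zy X = 2 * ?m |- _ => exact m end)). lia. }
  destruct Hp as [m [Hq1 [Hq2 Hq3]]]. split; [lia|split;[lia|]]. eapply even_of; eauto.
Qed.

Lemma op_leg c X W : zt (op c X W) = zt X \/ zt (op c X W) = zt W.
Proof. unfold op; prep X W; dall; cbn [zr zt zy]; auto. Qed.

Lemma op_R c X W : 1 <= c -> okp X -> okp W -> zr (op c X W) <= Z.max (zr X) (zr W).
Proof.
  intros Hc HX HW; okd. unfold op, Gh, d2; prep X W.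
  dall; cbn [zr zt zy] in *; dall; lia.
Qed.

Lemma op_sum c X W : zy (op c X W) + zy (op c W X) = zy X + zy W.
Proof.
  unfold op, Gh, d2; prep X W.
  dall; cbn [zr zt zy] in *; dall; lia.
Qed.

Lemma op_id c X : 1 <= c -> op c X X = X.
Proof.
  intros Hc. unfold op, Gh, d2; destruct X as [rx tx yx]; cbn [zr zt zy].
  rewrite Nat.eqb_refl. replace (Z.abs (rx - rx) + (yx - yx)) with 0 by lia.
  replace (Z.abs (rx - rx) - (yx - yx)) with 0 by lia.
  dall; try lia. f_equal; lia.
Qed.

Definition gd2 (P Q : zp) : Z := d2 P Q + Z.abs (zy P - zy Q).

Lemma op_gd c X W : 1 <= c -> okp X -> okp W ->
  gd2 W (op c X W) <= gd2 W X /\ (2*c <= gd2 W X -> gd2 W (op c X W) <= gd2 W X - 2).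
Proof.
  intros Hc HX HW; okd. unfold gd2, op, Gh, d2; prep X W.
  dall; cbn [zr zt zy] in *; dall; lia.
Qed.

Lemma gd2_even X W : okp X -> okp W -> exists m, gd2 X W = 2*m.
Proof.
  intros HX HW; okd. exists (gd2 X W / 2). unfold gd2, d2; prep X W. dall; Z.div_mod_to_equations; lia.
Qed.

Lemma d2_sym P Q : d2 P Q = d2 Q P.
Proof. unfold d2; destruct P, Q; cbn; dall; lia. Qed.

Lemma fold_le P Q s : 0 <= zr P -> 0 <= zr Q -> fz Q s - fz P s <= d2 P Q.
Proof. intros; unfold fz, d2; prep P Q; dall; lia. Qed.

Lemma realize P Q : 0 <= zr P -> 0 <= zr Q ->
  d2 P Q = fz Q (zt Q) - fz P (zt Q) \/ d2 P Q = fz P (zt P) - fz Q (zt P).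
Proof. intros; unfold fz, d2; prep P Q; dall; lia. Qed.

Lemma Gh_lip c u v : 1 <= c -> (exists m, u = 2*m) -> (exists m, v = 2*m) ->
  2 * Gh c v - 2 * Gh c u <= Z.max 0 (v - u).
Proof. intros Hc [m1 ->] [m2 ->]. unfold Gh; dall; lia. Qed.

Lemma evU X s : okp X -> exists m, fz X s + zy X = 2*m.
Proof. intros H; okd. exists ((fz X s + zy X)/2). unfold fz; destruct X as [rx tx yx]; cbn [zr zt zy] in *; dall; Z.div_mod_to_equations; lia. Qed.
Lemma evL X s : okp X -> exists m, fz X s - zy X = 2*m.
Proof. intros H; okd. exists ((fz X s - zy X)/2). unfold fz; destruct X as [rx tx yx]; cbn [zr zt zy] in *; dall; Z.div_mod_to_equations; lia. Qed.
Lemma evsub a b : (exists m, a = 2*m) -> (exists m, b = 2*m) -> exists m, a - b = 2*m.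
Proof. intros [m1 ->] [m2 ->]; exists (m1 - m2); lia. Qed.


Lemma edge c Xi Wi Xj Wj K : 1 <= c -> okp Xi -> okp Wi -> okp Xj -> okp Wj ->
  d2 Xi Xj - zy Xi - zy Xj <= K -> d2 Wi Wj - zy Wi - zy Wj <= K ->
  d2 (op c Xi Wi) (op c Xj Wj) - zy (op c Xi Wi) - zy (op c Xj Wj) <= K.
Proof.
  intros Hc Hxi Hwi Hxj Hwj HX HW.
  pose proof (op_ok c Xi Wi Hc Hxi Hwi) as Hoi.
  pose proof (op_ok c Xj Wj Hc Hxj Hwj) as Hoj.
  destruct (realize (op c Xi Wi) (op c Xj Wj)) as [Hr|Hr]; try (destruct Hoi; destruct Hoj; tauto).
  - set (s := zt (op c Xj Wj)) in *.
    assert (Hex : zt Xj = zt Wj \/ s = zt Xj \/ s = zt Wj \/ zr Xj = 0 \/ zr Wj = 0)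
      by (destruct (op_leg c Xj Wj); tauto).
    destruct (N2 c Xj Wj s Hc Hxj Hwj Hex) as [_ E2].
    pose proof (N1 c Xi Wi s Hc Hxi Hwi) as E1.
    pose proof (fold_le Xi Xj s ltac:(destruct Hxi; tauto) ltac:(destruct Hxj; tauto)).
    pose proof (fold_le Wi Wj s ltac:(destruct Hwi; tauto) ltac:(destruct Hwj; tauto)).
    pose proof (Gh_lip c (fz Wi s + zy Wi - (fz Xi s + zy Xi)) (fz Wj s - zy Wj - (fz Xj s - zy Xj)) Hc
       (evsub _ _ (evU Wi s Hwi) (evU Xi s Hxi)) (evsub _ _ (evL Wj s Hwj) (evL Xj s Hxj))).
    lia.
  - set (s := zt (op c Xi Wi)) in *.
    assert (Hex : zt Xi = zt Wi \/ s = zt Xi \/ s = zt Wi \/ zr Xi = 0 \/ zr Wi = 0)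
      by (destruct (op_leg c Xi Wi); tauto).
    destruct (N2 c Xi Wi s Hc Hxi Hwi Hex) as [_ E2].
    pose proof (N1 c Xj Wj s Hc Hxj Hwj) as E1.
    pose proof (fold_le Xj Xi s ltac:(destruct Hxj; tauto) ltac:(destruct Hxi; tauto)).
    pose proof (fold_le Wj Wi s ltac:(destruct Hwj; tauto) ltac:(destruct Hwi; tauto)).
    rewrite (d2_sym Xi Xj) in HX. rewrite (d2_sym Wi Wj) in HW.
    pose proof (Gh_lip c (fz Wj s + zy Wj - (fz Xj s + zy Xj)) (fz Wi s - zy Wi - (fz Xi s - zy Xi)) Hc
       (evsub _ _ (evU Wj s Hwj) (evU Xj s Hxj)) (evsub _ _ (evL Wi s Hwi) (evL Xi s Hxi))).
    lia.
Qed.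


Definition cond (c : Z) (pY qY pX qX : zp) (s : nat) (K1 : Z) : Prop :=
  (fz qY s - zy qY) - (fz qX s + zy qX)
  + 2 * Gh c ((fz pY s - zy pY) - (fz qY s - zy qY))
  - 2 * Gh c ((fz pX s + zy pX) - (fz qX s + zy qX)) > K1.

Definition rbad c pA qA pB qB K1 : Prop :=
  cond c pA qA pB qB (zt qA) K1 \/ cond c pA qA pB qB (zt pA) K1 \/
  cond c pB qB pA qA (zt qB) K1 \/ cond c pB qB pA qA (zt pB) K1.

Lemma bad_rbad c pA qA pB qB K1 : 1 <= c -> okp pA -> okp qA -> okp pB -> okp qB ->
  d2 (op c qA pA) (op c qB pB) - zy (op c qA pA) - zy (op c qB pB) > K1 ->
  rbad c pA qA pB qB K1.
Proof.
  intros Hc HpA HqA HpB HqB Hb.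
  pose proof (op_ok c qA pA Hc HqA HpA) as HoA.
  pose proof (op_ok c qB pB Hc HqB HpB) as HoB.
  unfold rbad.
  destruct (realize (op c qA pA) (op c qB pB)) as [Hr|Hr]; try (destruct HoA; destruct HoB; tauto).
  - set (s := zt (op c qB pB)) in *.
    assert (Hex : zt qB = zt pB \/ s = zt qB \/ s = zt pB \/ zr qB = 0 \/ zr pB = 0)
      by (destruct (op_leg c qB pB); tauto).
    destruct (N2 c qB pB s Hc HqB HpB Hex) as [_ E2].
    pose proof (N1 c qA pA s Hc HqA HpA) as E1.
    assert (cond c pB qB pA qA s K1) by (unfold cond; lia).
    destruct (op_leg c qB pB) as [E|E]; fold s in E; rewrite E in *; tauto.
  - set (s := zt (op c qA pA)) in *.
    assert (Hex : zt qA = zt pA \/ s = zt qA \/ s = zt pA \/ zr qA = 0 \/ zr pA = 0)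
      by (destruct (op_leg c qA pA); tauto).
    destruct (N2 c qA pA s Hc HqA HpA Hex) as [_ E2].
    pose proof (N1 c qB pB s Hc HqB HpB) as E1.
    assert (cond c pA qA pB qB s K1) by (unfold cond; lia).
    destruct (op_leg c qA pA) as [E|E]; fold s in E; rewrite E in *; tauto.
Qed.

Lemma Gh_cases c x : 1 <= c -> (2*c <= x /\ Gh c x = 1) \/ (x <= -(2*c) /\ Gh c x = -1) \/ (-(2*c) < x < 2*c /\ Gh c x = 0).
Proof. intros; unfold Gh; dall; lia. Qed.


Lemma cond_facts c Q w z K1 : 1 <= c ->
  (exists m, Q = 2*m) -> (exists m, w = 2*m) -> (exists m, z = 2*m) -> (exists m, K1 = 2*m) ->
  Q <= K1 -> Q + w - z <= K1 + 4 ->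
  Q + 2 * Gh c w - 2 * Gh c z > K1 ->
  z < w /\ ((Q = K1 /\ w - z <= 4) \/ (c = 1 /\ K1 - 2 <= Q /\ w - z <= 6 /\ z <= -2 /\ 2 <= w)) /\
  ((z < 2*c <= w) \/ (z <= -(2*c) < w)).
Proof.
  intros Hc [a ->] [b ->] [d ->] [f ->] H1 H2 H3.
  unfold Gh in *; dall; lia.
Qed.

Definition facts c pY qY pX qX s K1 : Prop :=
  let Q := (fz qY s - zy qY) - (fz qX s + zy qX) in
  let w := (fz pY s - zy pY) - (fz qY s - zy qY) in
  let z := (fz pX s + zy pX) - (fz qX s + zy qX) in
  z < w /\ ((Q = K1 /\ w - z <= 4) \/ (c = 1 /\ K1 - 2 <= Q /\ w - z <= 6 /\ z <= -2 /\ 2 <= w)) /\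
  ((z < 2*c <= w) \/ (z <= -(2*c) < w)).

Lemma cond_to_facts c pY qY pX qX s e : 1 <= c -> okp pY -> okp qY -> okp pX -> okp qX ->
  d2 pY pX - zy pY - zy pX <= 4*e + 4 -> d2 qY qX - zy qY - zy qX <= 4*e ->
  cond c pY qY pX qX s (4*e) -> facts c pY qY pX qX s (4*e).
Proof.
  intros Hc H1 H2 H3 H4 Hp Hq C. unfold cond, facts in *.
  pose proof (fold_le qX qY s ltac:(destruct H4; tauto) ltac:(destruct H2; tauto)).
  pose proof (fold_le pX pY s ltac:(destruct H3; tauto) ltac:(destruct H1; tauto)).
  rewrite d2_sym in Hp, Hq.
  apply cond_facts; try lia.
  - apply evsub; [apply evL | apply evU]; auto.
  - apply evsub; apply evL; auto.
  - apply evsub; apply evU; auto.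
  - exists (2*e); lia.
Qed.


Ltac legs := repeat (first [ progress (rewrite ?Nat.eqb_refl in * ) | match goal with
 | H : context [Nat.eqb ?a ?b] |- _ => destruct (Nat.eqb_spec a b); [subst|]
 end]).

Lemma no2 c pA qA pB qB e :
  1 <= c -> 1 <= e -> okp pA -> okp qA -> okp pB -> okp qB ->
  d2 pA pB - zy pA - zy pB <= 4*e + 4 -> d2 qA qB - zy qA - zy qB <= 4*e ->
  rbad c pA qA pB qB (4*e) -> rbad (c+2) pA qA pB qB (4*e) -> False.
Proof.
  intros Hc He HpA HqA HpB HqB H1 H2 C1 C2.
  assert (H1' : d2 pB pA - zy pB - zy pA <= 4*e + 4) by (rewrite d2_sym; lia).
  assert (H2' : d2 qB qA - zy qB - zy qA <= 4*e) by (rewrite d2_sym; lia).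
  unfold rbad in *.
  destruct C1 as [C1|[C1|[C1|C1]]]; (apply cond_to_facts in C1; [|lia|assumption..]);
  destruct C2 as [C2|[C2|[C2|C2]]]; (apply cond_to_facts in C2; [|lia|assumption..]);
  clear H1' H2'; okd;
  unfold facts, fz, d2 in *;
  destruct pA as [ra ta ya]; destruct qA as [ra' ta' ya']; destruct pB as [rb tb yb]; destruct qB as [rb' tb' yb'];
  cbn [zr zt zy] in *;
  legs; lia.
Qed.


Close Scope Z_scope.
Open Scope R_scope.

Definition toZ (x : Tpt * R) : zp :=
  ZP (up (2 * tr (fst x)) - 1)%Z (tleg (fst x)) (up (2 * snd x) - 1)%Z.
Definition fromZ (P : zp) : Tpt * R := (mkT (IZR (zr P) / 2) (zt P), IZR (zy P) / 2).

Lemma up_int z : up (IZR z) = (z + 1)%Z.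
Proof. symmetry. apply tech_up; rewrite plus_IZR; lra. Qed.

Lemma twice_int_or_half r : (is_int r \/ is_proper_half r) ->
  IZR (up (2 * r) - 1) = 2 * r.
Proof.
  intros [[z ->]|[z ->]].
  - replace (2 * IZR z) with (IZR (2 * z)) by (rewrite mult_IZR; lra).
    rewrite up_int. f_equal. lia.
  - replace (2 * (IZR z + / 2)) with (IZR (2 * z + 1)) by (rewrite plus_IZR, mult_IZR; lra).
    rewrite up_int, minus_IZR, plus_IZR. lra.
Qed.

Lemma even_or_odd z : (exists m, z = 2 * m)%Z \/ (exists m, z = 2 * m + 1)%Z.
Proof.
  destruct (Z.even z) eqn:E.
  - left. apply Z.even_spec in E. exact E.
  - right. assert (Z.odd z = true) by (rewrite <- Z.negb_even, E; reflexivity).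
    apply Z.odd_spec in H. exact H.
Qed.

Lemma toZ_G k x : in_G k x -> 0 <= snd x ->
  okp (toZ x) /\ (1 <= zt (toZ x) <= k)%nat /\ fromZ (toZ x) = x.
Proof.
  intros [[Hr Hl] Hg] Hy. unfold okp, toZ, fromZ; cbn [zr zt zy fst snd].
  destruct x as [[r t] y]; cbn in *.
  assert (E1 : IZR (up (2 * r) - 1) = 2 * r) by (apply twice_int_or_half; tauto).
  assert (E2 : IZR (up (2 * y) - 1) = 2 * y) by (apply twice_int_or_half; tauto).
  split; [|split; [exact Hl|]].
  - split; [apply le_IZR; lra|split; [apply le_IZR; lra|]].
    destruct Hg as [[[z1 H1] [z2 H2]]|[[z1 H1] [z2 H2]]]; subst r y.
    + eapply even_of with (m := (z1 + z2)%Z).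
      apply eq_IZR. rewrite plus_IZR, E1, E2, mult_IZR, plus_IZR. lra.
    + eapply even_of with (m := (z1 + z2 + 1)%Z).
      apply eq_IZR. rewrite plus_IZR, E1, E2, mult_IZR, plus_IZR, plus_IZR. lra.
  - rewrite E1, E2. f_equal; [f_equal|]; lra.
Qed.

Lemma fromZ_G k P : okp P -> (1 <= zt P <= k)%nat -> in_G k (fromZ P) /\ 0 <= snd (fromZ P).
Proof.
  intros [H1 [H2 H3]] Hl. unfold in_G, valid_T, fromZ; cbn [fst snd tr tleg].
  apply IZR_le in H1; apply IZR_le in H2.
  split; [split; [split; [lra|exact Hl]|]|lra].
  apply even_wit in H3. destruct H3 as [m Hm].
  destruct (even_or_odd (zr P)) as [[a Ha]|[a Ha]].
  - left. split.
    + exists a. rewrite Ha, mult_IZR. lra.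
    + exists (m - a)%Z. assert (zy P = 2 * (m - a))%Z by lia. rewrite H, mult_IZR. lra.
  - right. split.
    + exists a. rewrite Ha, plus_IZR, mult_IZR. lra.
    + exists (m - a - 1)%Z. assert (zy P = 2 * (m - a - 1) + 1)%Z by lia. rewrite H, plus_IZR, mult_IZR. lra.
Qed.

Lemma tdist_Z P Q : tdist (fst (fromZ P)) (fst (fromZ Q)) = IZR (d2 P Q) / 2.
Proof.
  unfold tdist, d2, fromZ; cbn [fst tr tleg].
  destruct (Nat.eqb (zt P) (zt Q)).
  - rewrite abs_IZR, minus_IZR. replace (IZR (zr P) / 2 - IZR (zr Q) / 2) with ((IZR (zr P) - IZR (zr Q)) / 2) by lra.
    unfold Rdiv. rewrite Rabs_mult. rewrite (Rabs_right (/2)) by lra. reflexivity.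
  - rewrite plus_IZR; lra.
Qed.

Lemma gdist_Z P Q : gdist (fromZ P) (fromZ Q) = IZR (gd2 P Q) / 2.
Proof.
  unfold gdist, gd2. rewrite tdist_Z. unfold fromZ; cbn [snd].
  rewrite plus_IZR, abs_IZR, minus_IZR.
  replace (IZR (zy P) / 2 - IZR (zy Q) / 2) with ((IZR (zy P) - IZR (zy Q)) / 2) by lra.
  unfold Rdiv. rewrite Rabs_mult. rewrite (Rabs_right (/2)) by lra. lra.
Qed.


Definition ZPot (n k : nat) (E : nat -> nat -> Prop) (dd : nat -> nat -> nat) (M : nat)
  (Qz : nat -> zp) : Prop :=
  (forall i j, E i j -> (d2 (Qz i) (Qz j) - zy (Qz i) - zy (Qz j) <= 4 * Z.of_nat (dd i j))%Z) /\
  (forall s, (1 <= s <= k)%nat -> Qz s = ZP (2 * Z.of_nat M) s 0) /\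
  (forall i, (1 <= i <= n)%nat -> okp (Qz i) /\ (1 <= zt (Qz i) <= k)%nat /\ (zr (Qz i) <= 2 * Z.of_nat M)%Z).

Definition zcost (n k : nat) (c : nat -> nat) (Qz : nat -> zp) : Z :=
  fold_right Z.add 0%Z (map (fun i => (Z.of_nat (c i) * zy (Qz i))%Z) (seq (S k) (n - k))).

Lemma tdist0 x : 0 <= tr x -> tdist (mkT 0 1) x = tr x.
Proof. intros H. unfold tdist; cbn [tleg tr]. destruct (Nat.eqb 1 (tleg x)); [rewrite Rabs_left1 by lra|]; lra. Qed.

Lemma pot_toZ n k E dd M q : simple_network n k E -> in_Gn n k q -> is_potential n k E dd M q ->
  ZPot n k E dd M (fun i => toZ (q i)) /\ (forall i, (1 <= i <= n)%nat -> fromZ (toZ (q i)) = q i).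
Proof.
  intros [Hkn [HE [Hsym Hnt]]] HG [Hed [Hterm Hrng]].
  assert (Hall : forall i, (1 <= i <= n)%nat -> okp (toZ (q i)) /\ (1 <= zt (toZ (q i)) <= k)%nat /\ fromZ (toZ (q i)) = q i).
  { intros i Hi. apply toZ_G. apply HG; auto. apply Hrng; auto. }
  split; [|intros i Hi; apply Hall; auto].
  split; [|split].
  - intros i j Hij. destruct (HE i j Hij) as [Hi [Hj _]].
    pose proof (Hed i j Hij) as H.
    rewrite <- (proj2 (proj2 (Hall i Hi))), <- (proj2 (proj2 (Hall j Hj))) in H.
    rewrite tdist_Z in H. unfold fromZ in H; cbn [snd] in H.
    apply le_IZR. rewrite !minus_IZR, mult_IZR, <- INR_IZR_INZ. lra.
  - intros s Hs. destruct (Hterm s Hs) as [H1 [H2 H3]].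
    unfold toZ. rewrite H1, H2, H3.
    replace (2 * INR M) with (IZR (2 * Z.of_nat M)) by (rewrite mult_IZR, <- INR_IZR_INZ; lra).
    replace (2 * 0) with (IZR 0) by lra. rewrite !up_int. f_equal; lia.
  - intros i Hi. destruct (Hall i Hi) as [Ho [Hl Hf]]. split; [auto|split; [auto|]].
    destruct (Hrng i Hi) as [_ Hb]. rewrite <- Hf in Hb. unfold fromZ at 1 in Hb; cbn [fst] in Hb.
    assert (0 <= IZR (zr (toZ (q i)))) by (apply IZR_le; destruct Ho; tauto).
    rewrite tdist0 in Hb by (cbn [tr]; lra).
    cbn [tr] in Hb. apply le_IZR. rewrite mult_IZR, <- INR_IZR_INZ. lra.
Qed.

Lemma pot_fromZ n k E dd M Qz : simple_network n k E -> ZPot n k E dd M Qz ->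
  in_Gn n k (fun i => fromZ (Qz i)) /\ is_potential n k E dd M (fun i => fromZ (Qz i)).
Proof.
  intros [Hkn [HE [Hsym Hnt]]] [Hed [Hterm Hrng]].
  split.
  - intros i Hi. destruct (Hrng i Hi) as [Ho [Hl _]]. apply (fromZ_G k (Qz i) Ho Hl).
  - split; [|split].
    + intros i j Hij. pose proof (Hed i j Hij) as H. rewrite tdist_Z. unfold fromZ; cbn [snd].
      apply IZR_le in H. rewrite !minus_IZR, mult_IZR, <- INR_IZR_INZ in H. lra.
    + intros s Hs. rewrite (Hterm s Hs). unfold fromZ; cbn [fst snd tr tleg zr zt zy]. rewrite mult_IZR, <- INR_IZR_INZ.
      split; [lra|split; [reflexivity|lra]].
    + intros i Hi. destruct (Hrng i Hi) as [[H1 [H2 _]] [Hl Hb]].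
      apply IZR_le in H1; apply IZR_le in H2; apply IZR_le in Hb. rewrite mult_IZR, <- INR_IZR_INZ in Hb.
      unfold fromZ; cbn [snd fst]. rewrite tdist0 by (cbn [tr]; lra). cbn [tr]. split; lra.
Qed.

Lemma cost_Z n k c Qz : cost n k c (fun i => fromZ (Qz i)) = IZR (zcost n k c Qz) / 2.
Proof.
  unfold cost, zcost. generalize (seq (S k) (n - k)). intros l; induction l as [|i l IH].
  - cbn [map fold_right]. lra.
  - cbn [map fold_right]. rewrite IH, plus_IZR, mult_IZR, <- INR_IZR_INZ. unfold fromZ; cbn [snd]. lra.
Qed.

Lemma cost_ext n k c q q' : (1 <= k)%nat -> (forall i, (1 <= i <= n)%nat -> q i = q' i) ->
  cost n k c q = cost n k c q'.
Proof.
  intros Hk H. unfold cost. f_equal. apply map_ext_in. intros i Hi.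
  apply in_seq in Hi. rewrite H by lia. reflexivity.
Qed.

Lemma gnorm_le n p q : (forall i, (1 <= i <= n)%nat -> gdist (p i) (q i) <= 2) -> gnorm n p q <= 2.
Proof.
  intros H. unfold gnorm.
  assert (forall l, (forall i, In i l -> gdist (p i) (q i) <= 2) ->
    fold_right Rmax 0 (map (fun i => gdist (p i) (q i)) l) <= 2).
  { induction l as [|i l IH]; cbn; intros Hl. lra.
    apply Rmax_lub; [apply Hl; auto|apply IH; intros; apply Hl; auto]. }
  apply H0. intros i Hi. apply in_seq in Hi. apply H. lia.
Qed.

Close Scope R_scope.
Open Scope Z_scope.

Lemma pick_c c0 pA qA pB qB e : 1 <= c0 -> 1 <= e -> okp pA -> okp qA -> okp pB -> okp qB ->
  d2 pA pB - zy pA - zy pB <= 4*e + 4 -> d2 qA qB - zy qA - zy qB <= 4*e ->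
  exists c, (c = c0 \/ c = c0 + 2) /\
    d2 (op c qA pA) (op c qB pB) - zy (op c qA pA) - zy (op c qB pB) <= 4*e.
Proof.
  intros Hc He HpA HqA HpB HqB H1 H2.
  destruct (Z_le_gt_dec (d2 (op c0 qA pA) (op c0 qB pB) - zy (op c0 qA pA) - zy (op c0 qB pB)) (4*e)) as [G|G].
  - exists c0; auto.
  - destruct (Z_le_gt_dec (d2 (op (c0+2) qA pA) (op (c0+2) qB pB) - zy (op (c0+2) qA pA) - zy (op (c0+2) qB pB)) (4*e)) as [G'|G'].
    + exists (c0+2); auto.
    + exfalso. apply (no2 c0 pA qA pB qB e); auto.
      * apply bad_rbad; auto.
      * apply bad_rbad; auto; lia.
Qed.

Lemma Zmin_exists (P : Z -> Prop) : (exists z, P z) -> (forall z, P z -> 0 <= z) ->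
  exists z, P z /\ forall w, P w -> z <= w.
Proof.
  intros [z0 Hz0] Hpos.
  set (Pn := fun m : nat => P (Z.of_nat m)).
  assert (Hdec : forall m, Pn m \/ ~ Pn m) by (intros; apply classic).
  assert (Hex : exists m, Pn m) by (exists (Z.to_nat z0); unfold Pn; rewrite Z2Nat.id by (apply Hpos; auto); auto).
  destruct (dec_inh_nat_subset_has_unique_least_element Pn Hdec Hex) as [m [[Hm Hmin] _]].
  exists (Z.of_nat m). split; auto. intros w Hw.
  pose proof (Hpos w Hw). assert (Pn (Z.to_nat w)) by (unfold Pn; rewrite Z2Nat.id; auto).
  apply Hmin in H0. lia.
Qed.

Lemma sum_le (f g : nat -> Z) l : (forall i, In i l -> f i <= g i) ->
  fold_right Z.add 0 (map f l) <= fold_right Z.add 0 (map g l).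
Proof.
  induction l as [|x l IH]; cbn [In map fold_right]; intros H; [lia|].
  pose proof (H x (or_introl eq_refl)).
  assert (fold_right Z.add 0 (map f l) <= fold_right Z.add 0 (map g l)) by (apply IH; intros; apply H; auto).
  lia.
Qed.

Lemma sum_le_lt (f g : nat -> Z) l : (forall i, In i l -> f i <= g i) ->
  (exists i, In i l /\ f i < g i) ->
  fold_right Z.add 0 (map f l) < fold_right Z.add 0 (map g l).
Proof.
  induction l as [|x l IH]; cbn [In map fold_right]; intros H [i [Hi Hlt]]; [contradiction|].
  destruct Hi as [->|Hi].
  - assert (fold_right Z.add 0 (map f l) <= fold_right Z.add 0 (map g l)) by (apply sum_le; intros; apply H; auto).
    lia.
  - pose proof (H x (or_introl eq_refl)).
    assert (fold_right Z.add 0 (map f l) < fold_right Z.add 0 (map g l)).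
    { apply IH; [intros; apply H; auto|exists i; auto]. }
    lia.
Qed.

Lemma sum_nonneg (f : nat -> Z) l : (forall i, In i l -> 0 <= f i) -> 0 <= fold_right Z.add 0 (map f l).
Proof. induction l as [|x l IH]; cbn; intros H; [lia|]. pose proof (H x (or_introl eq_refl)).
  assert (0 <= fold_right Z.add 0 (map f l)) by (apply IH; auto). lia. Qed.

Lemma sum_add (f g h1 h2 : nat -> Z) l : (forall i, In i l -> f i + g i = h1 i + h2 i) ->
  fold_right Z.add 0 (map f l) + fold_right Z.add 0 (map g l) =
  fold_right Z.add 0 (map h1 l) + fold_right Z.add 0 (map h2 l).
Proof. induction l as [|x l IH]; cbn; intros H; [lia|]. pose proof (H x (or_introl eq_refl)).
  assert (Hr : forall i, In i l -> f i + g i = h1 i + h2 i) by auto. specialize (IH Hr). lia. Qed.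

Definition Q0 (k M : nat) (i : nat) : zp :=
  if Nat.leb i k then ZP (2 * Z.of_nat M) i 0 else ZP 0 1 (2 * Z.of_nat M).

Lemma Q0_pot n k E dd M : simple_network n k E -> ZPot n k E dd M (fun i => Q0 k M i).
Proof.
  intros [Hkn [HE [Hsym Hnt]]]. split; [|split].
  - intros i j Hij. destruct (HE i j Hij) as [Hi [Hj Hne]]. pose proof (Hnt i j Hij).
    unfold Q0, d2. destruct (Nat.leb_spec i k); destruct (Nat.leb_spec j k); cbn [zr zt zy]; try lia;
    destruct (Nat.eqb _ _); lia.
  - intros s Hs. unfold Q0. destruct (Nat.leb_spec s k); [reflexivity|lia].
  - intros i Hi. unfold Q0. destruct (Nat.leb_spec i k); cbn [zr zt zy]; unfold okp; cbn [zr zt zy].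
    + split; [split; [lia|split; [lia|apply (even_of _ (Z.of_nat M)); lia]]|lia].
    + split; [split; [lia|split; [lia|apply (even_of _ (Z.of_nat M)); lia]]|lia].
Qed.

Lemma dec_le d a b i j : (dec_edge d a b i j <= d i j)%nat.
Proof. unfold dec_edge. destruct (_ || _)%bool; lia. Qed.

Lemma zcost_nonneg n k E dd M c Qz : ZPot n k E dd M Qz -> (1 <= k)%nat -> 0 <= zcost n k c Qz.
Proof.
  intros [_ [_ Hr]] Hk. unfold zcost. apply sum_nonneg. intros i Hi. apply in_seq in Hi.
  destruct (Hr i ltac:(lia)) as [[_ [Hy _]] _]. lia.
Qed.


Definition PhiS (n : nat) (Pz Qz : nat -> zp) : Z :=
  fold_right Z.add 0 (map (fun i => gd2 (Pz i) (Qz i)) (seq 1 n)).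

Lemma gd2_nonneg P Q : okp P -> okp Q -> 0 <= gd2 P Q.
Proof. intros HP HQ; okd. unfold gd2, d2; destruct P as [r1 t1 y1], Q as [r2 t2 y2]; cbn [zr zt zy] in *; destruct (Nat.eqb _ _); lia. Qed.

Lemma dec_ab d a b : a <> b -> dec_edge d a b a b = (d a b - 1)%nat.
Proof. intros. unfold dec_edge. rewrite !Nat.eqb_refl. reflexivity. Qed.
Lemma dec_ba d a b : a <> b -> dec_edge d a b b a = (d b a - 1)%nat.
Proof. intros H. unfold dec_edge. rewrite !Nat.eqb_refl. destruct (Nat.eqb_spec b a); [lia|]. reflexivity. Qed.
Lemma dec_other d a b i j : ~ ((i = a /\ j = b) \/ (i = b /\ j = a)) -> dec_edge d a b i j = d i j.
Proof.
  intros H. unfold dec_edge.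
  destruct (Nat.eqb_spec i a); destruct (Nat.eqb_spec j b); destruct (Nat.eqb_spec i b); destruct (Nat.eqb_spec j a);
  cbn; try reflexivity; exfalso; apply H; tauto.
Qed.

Lemma mainZ n k E c d M a b Pz :
  simple_network n k E -> (forall i j, E i j -> d i j = d j i) -> E a b -> (2 <= d a b)%nat ->
  ZPot n k E d M Pz -> (forall Qz, ZPot n k E d M Qz -> zcost n k c Pz <= zcost n k c Qz) ->
  exists Qs, ZPot n k E (dec_edge d a b) M Qs /\
    (forall Qz, ZPot n k E (dec_edge d a b) M Qz -> zcost n k c Qs <= zcost n k c Qz) /\
    forall i, (1 <= i <= n)%nat -> gd2 (Pz i) (Qs i) <= 4.
Proof.
  intros Hnet Hsym Hab Hd2 HPz Hopt.
  pose proof Hnet as [Hkn [HE [HEsym Hnt]]].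
  set (d1 := dec_edge d a b).
  destruct (Zmin_exists (fun z => exists Qz, ZPot n k E d1 M Qz /\ zcost n k c Qz = z)) as [m0 [[Q1 [HQ1 HQ1c]] Hm0]].
  { exists (zcost n k c (fun i => Q0 k M i)). exists (fun i => Q0 k M i); split; auto. apply Q0_pot; auto. }
  { intros z [Qz [HQ <-]]. eapply zcost_nonneg; eauto. lia. }
  destruct (Zmin_exists (fun z => exists Qz, ZPot n k E d1 M Qz /\ zcost n k c Qz = m0 /\ PhiS n Pz Qz = z))
    as [f0 [[Qs [HQs [HQsc HQsf]]] Hf0]].
  { exists (PhiS n Pz Q1). exists Q1. auto. }
  { intros z [Qz [HQ [_ <-]]]. unfold PhiS. apply sum_nonneg. intros i Hi. apply in_seq in Hi.
    apply gd2_nonneg; [apply HPz|apply HQ]; lia. }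
  exists Qs. split; [exact HQs|split].
  { intros Qz HQz. rewrite HQsc. apply Hm0. eauto. }
  intros i0 Hi0.
  destruct (Z_le_gt_dec (gd2 (Pz i0) (Qs i0)) 4) as [Hle|Hgt]; [exact Hle|exfalso].
  destruct HPz as [HPe [HPt HPr]]. destruct HQs as [HQe [HQt HQr]].
  destruct (gd2_even (Pz i0) (Qs i0) (proj1 (HPr i0 Hi0)) (proj1 (HQr i0 Hi0))) as [m Hm].
  assert (Hab' : a <> b) by (destruct (HE a b Hab) as [_ [_ H]]; exact H).
  destruct (HE a b Hab) as [Ha [Hb _]].
  set (e := Z.of_nat (d a b) - 1).
  assert (He1 : 1 <= e) by (unfold e; lia).
  assert (HsP : d2 (Pz a) (Pz b) - zy (Pz a) - zy (Pz b) <= 4*e + 4) by (pose proof (HPe a b Hab); unfold e; lia).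
  assert (HsQ : d2 (Qs a) (Qs b) - zy (Qs a) - zy (Qs b) <= 4*e).
  { pose proof (HQe a b Hab) as H. unfold d1 in H. rewrite dec_ab in H by auto. unfold e. lia. }
  destruct (pick_c (m - 2) (Pz a) (Qs a) (Pz b) (Qs b) e ltac:(lia) He1
     (proj1 (HPr a Ha)) (proj1 (HQr a Ha)) (proj1 (HPr b Hb)) (proj1 (HQr b Hb)) HsP HsQ) as [cc [Hcc Hgood]].
  assert (Hc1 : 1 <= cc) by lia.
  set (Psi := fun i => op cc (Qs i) (Pz i)).
  set (Phi := fun i => op cc (Pz i) (Qs i)).
  assert (Hterm : forall s, (1 <= s <= k)%nat -> Qs s = Pz s) by (intros; rewrite HQt, HPt; auto).
  assert (HrngT : forall (X W : nat -> zp) i, (1 <= i <= n)%nat ->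
     (okp (X i) /\ (1 <= zt (X i) <= k)%nat /\ zr (X i) <= 2 * Z.of_nat M) ->
     (okp (W i) /\ (1 <= zt (W i) <= k)%nat /\ zr (W i) <= 2 * Z.of_nat M) ->
     okp (op cc (X i) (W i)) /\ (1 <= zt (op cc (X i) (W i)) <= k)%nat /\ zr (op cc (X i) (W i)) <= 2 * Z.of_nat M).
  { intros X W i Hi [H1 [H2 H3]] [H4 [H5 H6]]. split; [apply op_ok; auto|split].
    - destruct (op_leg cc (X i) (W i)) as [->| ->]; auto.
    - pose proof (op_R cc (X i) (W i) Hc1 H1 H4). lia. }
  assert (HPsi : ZPot n k E d1 M Psi).
  { split; [|split].
    - intros i j Hij. destruct (HE i j Hij) as [Hi [Hj _]]. unfold Psi.
      destruct (classic ((i = a /\ j = b) \/ (i = b /\ j = a))) as [[[-> ->]|[-> ->]]|Hno].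
      + unfold d1. rewrite dec_ab by auto. unfold e in Hgood. lia.
      + unfold d1. rewrite dec_ba by auto. rewrite <- (Hsym a b Hab). unfold e in Hgood.
        rewrite d2_sym. lia.
      + unfold d1. rewrite dec_other by auto.
        apply edge; auto; try apply HQr; try apply HPr; auto.
        * pose proof (HQe i j Hij) as H. unfold d1 in H. rewrite dec_other in H by auto. exact H.
    - intros s Hs. unfold Psi. rewrite Hterm by auto. rewrite op_id by auto. apply HPt; auto.
    - intros i Hi. unfold Psi. apply HrngT; auto. }
  assert (HPhi : ZPot n k E d M Phi).
  { split; [|split].
    - intros i j Hij. destruct (HE i j Hij) as [Hi [Hj _]]. unfold Phi.
      apply edge; auto; try apply HQr; try apply HPr; auto.
      pose proof (HQe i j Hij) as H. pose proof (dec_le d a b i j). unfold d1 in H. lia.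
    - intros s Hs. unfold Phi. rewrite Hterm by auto. rewrite op_id by auto. apply HPt; auto.
    - intros i Hi. unfold Phi. apply HrngT; auto. }
  assert (Hsum : zcost n k c Psi + zcost n k c Phi = zcost n k c Qs + zcost n k c Pz).
  { unfold zcost. apply sum_add. intros i _. unfold Psi, Phi.
    pose proof (op_sum cc (Qs i) (Pz i)). nia. }
  pose proof (Hopt Phi HPhi) as H1.
  assert (Hcost : zcost n k c Psi = m0).
  { assert (m0 <= zcost n k c Psi) by (apply Hm0; eauto). lia. }
  assert (Hlt : PhiS n Pz Psi < PhiS n Pz Qs).
  { unfold PhiS. apply sum_le_lt.
    - intros i Hi. apply in_seq in Hi. unfold Psi.
      apply (op_gd cc (Qs i) (Pz i) Hc1 (proj1 (HQr i ltac:(lia))) (proj1 (HPr i ltac:(lia)))).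
    - exists i0. split; [apply in_seq; lia|]. unfold Psi.
      pose proof (op_gd cc (Qs i0) (Pz i0) Hc1 (proj1 (HQr i0 Hi0)) (proj1 (HPr i0 Hi0))) as [_ H].
      assert (gd2 (Pz i0) (op cc (Qs i0) (Pz i0)) <= gd2 (Pz i0) (Qs i0) - 2) by (apply H; lia). lia. }
  assert (f0 <= PhiS n Pz Psi) by (apply Hf0; exists Psi; auto).
  lia.
Qed.

Close Scope Z_scope.
Open Scope R_scope.

Lemma h_pot n k E c d M q : is_potential n k E d M q -> h n k E c d M q = Finite (cost n k c q).
Proof. intros H. unfold h. destruct (excluded_middle_informative _); [reflexivity|contradiction]. Qed.
Lemma h_npot n k E c d M q : ~ is_potential n k E d M q -> h n k E c d M q = p_infty.
Proof. intros H. unfold h. destruct (excluded_middle_informative _); [contradiction|reflexivity]. Qed.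

Theorem theorem3p12 (n k : nat) (E : nat -> nat -> Prop) (c : nat -> nat)
    (d : nat -> nat -> nat) (M : nat) (a b : nat) (p : nat -> Tpt * R) :
  simple_network n k E ->
  (forall i j, E i j -> d i j = d j i) ->
  (forall i j, E i j -> (0 < d i j)%nat) ->
  (0 < M)%nat ->
  E a b -> Nat.Even (d a b) ->
  is_minimizer n k E c d M p ->
  exists q : nat -> Tpt * R,
    is_minimizer n k E c (dec_edge d a b) M q /\ gnorm n p q <= 2.
Proof.
  intros Hnet Hsym Hpos HM Hab Hev [HpG Hpmin].
  pose proof Hnet as [Hkn [HE [HEsym Hnt]]].
  assert (Hp : is_potential n k E d M p).
  { destruct (pot_fromZ n k E d M (fun i => Q0 k M i) Hnet (Q0_pot n k E d M Hnet)) as [HG0 HP0].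
    pose proof (Hpmin _ HG0) as H. rewrite (h_pot _ _ _ _ _ _ _ HP0) in H.
    destruct (classic (is_potential n k E d M p)) as [Hp|Hp]; auto.
    rewrite (h_npot _ _ _ _ _ _ _ Hp) in H. cbn in H. contradiction. }
  destruct (pot_toZ n k E d M p Hnet HpG Hp) as [HPz Hback].
  set (Pz := fun i => toZ (p i)) in *.
  assert (Hcp : cost n k c p = IZR (zcost n k c Pz) / 2).
  { rewrite <- cost_Z. apply cost_ext; [lia|]. intros i Hi. symmetry. apply Hback; auto. }
  assert (Hopt : forall Qz, ZPot n k E d M Qz -> (zcost n k c Pz <= zcost n k c Qz)%Z).
  { intros Qz HQz. destruct (pot_fromZ n k E d M Qz Hnet HQz) as [HG HP].
    pose proof (Hpmin _ HG) as H. rewrite (h_pot _ _ _ _ _ _ _ HP), (h_pot _ _ _ _ _ _ _ Hp) in H.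
    cbn in H. rewrite Hcp, cost_Z in H. apply le_IZR. lra. }
  assert (Hd2 : (2 <= d a b)%nat).
  { destruct Hev as [m Hm]. pose proof (Hpos a b Hab). lia. }
  destruct (mainZ n k E c d M a b Pz Hnet Hsym Hab Hd2 HPz Hopt) as [Qs [HQs [HQopt HQclose]]].
  exists (fun i => fromZ (Qs i)).
  destruct (pot_fromZ n k E (dec_edge d a b) M Qs Hnet HQs) as [HqG Hq].
  split.
  - split; [exact HqG|]. intros q' Hq'G.
    rewrite (h_pot _ _ _ _ _ _ _ Hq).
    destruct (classic (is_potential n k E (dec_edge d a b) M q')) as [Hq'|Hq'].
    + rewrite (h_pot _ _ _ _ _ _ _ Hq'). cbn.
      destruct (pot_toZ n k E (dec_edge d a b) M q' Hnet Hq'G Hq') as [HZ' Hback'].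
      pose proof (HQopt _ HZ') as Hle.
      rewrite cost_Z.
      rewrite (cost_ext n k c q' (fun i => fromZ (toZ (q' i)))) by (try lia; intros i Hi; symmetry; apply Hback'; auto).
      rewrite cost_Z. apply IZR_le in Hle. lra.
    + rewrite (h_npot _ _ _ _ _ _ _ Hq'). cbn. exact I.
  - apply gnorm_le. intros i Hi. rewrite <- (Hback i Hi). rewrite gdist_Z.
    pose proof (HQclose i Hi) as Hcl. apply IZR_le in Hcl. unfold Pz in Hcl. lra.
Qed.
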